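(* Let $\Gamma$ be a distance-regular graph with diameter $D\ge 3$ and valency $k$, and assume $\Gamma$ is bipartite or almost bipartite. Then: (i) for every $\theta\in\mathbb{R}$ the pair $\theta,k$ is tight; (ii) for every $\theta\in\mathbb{R}$ the pair $\theta,-k$ is tight; (iii) $\Gamma$ has no further tight pairs, i.e. if $\theta,\theta'\in\mathbb{R}$ form a tight pair then at least one of $\theta,\theta'$ lies in $\{k,-k\}$.
   Context: $\Gamma$ is a finite connected undirected graph without loops or multiple edges, with path-length distance $\partial$ and diameter $D$; it is distance-regular with intersection numbers $a_i=p^i_{1i}$, $b_i=p^i_{1,i+1}$, $c_i=p^i_{1,i-1}$ (with $c_0=0$, $b_D=0$), valency $k=b_0$, and $c_i+a_i+b_i=k$ for $0\le i\le D$. $\Gamma$ is bipartite if $a_i=0$ for $0\le i\le D$; almost bipartite if $a_D\ne 0$ and $a_i=0$ for $0\le i\le D-1$. For $\theta\in\mathbb{R}$, the pseudo cosine sequence for $\theta$ is the unique sequence of reals $\sigma_0,\dots,\sigma_D$ with $\sigma_0=1$ and $c_i\sigma_{i-1}+a_i\sigma_i+b_i\sigma_{i+1}=\theta\sigma_i$ for $0\le i\le D-1$ ($\sigma_{-1}$ indeterminate, as $c_0=0$); then $\theta=k\sigma_1$. A sequence is a pseudo cosine sequence if it is the pseudo cosine sequence for some real $\theta$. Two pseudo cosine sequences $\sigma_0,\dots,\sigma_D$ and $\rho_0,\dots,\rho_D$ form a tight pair if $\sigma_0\rho_0,\sigma_1\rho_1,\dots,\sigma_D\rho_D$ is a pseudo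 cosine sequence. Two reals $\theta,\theta'$ form a tight pair if their pseudo cosine sequences form a tight pair. *)

(* Defs.v *)
From HB Require Import structures.
From mathcomp Require Import all_boot all_order all_algebra.
From mathcomp Require Import reals.
Set Implicit Arguments. Unset Strict Implicit. Unset Printing Implicit Defensive.
Import Order.TTheory GRing.Theory Num.Theory.

(* A finite simple graph: vertex type T : finType, adjacency e : rel T
   (assumed symmetric and irreflexive in the theorem). *)
Section Graph.
Variables (T : finType) (e : rel T).

Fixpoint ball (n : nat) (x : T) : {set T} :=
  match n with
  | 0 => [set x]
  | n'.+1 => ball n' x :|: [set z | [exists w in ball n' x, e w z]]
  end.

(* path-length distance: least n with y in ball n x
   (for a connected graph this is < #|T|) *)
Definition dist (x y : T) : nat :=
  find (fun n => y \in ball n x) (iota 0 #|T|).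

Definition connected_graph : Prop := forall x y : T, connect e x y.

Definition pcount (x y : T) (i j : nat) : nat :=
  #|[set z | (dist x z == i) && (dist y z == j)]|.

Definition distance_regular : Prop :=
  connected_graph /\
  forall x y x' y', dist x y = dist x' y' ->
    forall i j, pcount x y i j = pcount x' y' i j.

Definition inum (h i j : nat) : nat :=
  match [pick xy : T * T | dist xy.1 xy.2 == h] with
  | Some xy => pcount xy.1 xy.2 i j
  | None => 0
  end.

Definition ai (i : nat) : nat := inum i 1 i.
Definition bi (i : nat) : nat := inum i 1 i.+1.
Definition ci (i : nat) : nat := inum i 1 i.-1.
Definition valency : nat := bi 0.

Definition diameter : nat := \max_(xy : T * T) dist xy.1 xy.2.

Definition bipartite_drg : Prop := forall i, i <= diameter -> ai i = 0.
Definition almost_bipartite_drg : Prop :=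
  ai diameter <> 0 /\ forall i, i < diameter -> ai i = 0.

Local Open Scope ring_scope.
Variable R : realType.

(* s is the pseudo cosine sequence for theta (only s_0..s_D matter);
   at i = 0 the term c_0 * s_{-1} vanishes since c_0 = 0. *)
Definition is_pcs (theta : R) (s : nat -> R) : Prop :=
  s 0%N = 1 /\
  forall i : nat, (i < diameter)%N ->
    (ci i)%:R * s i.-1 + (ai i)%:R * s i + (bi i)%:R * s i.+1 = theta * s i.

Definition is_pseudo_cosine_seq (s : nat -> R) : Prop :=
  exists theta : R, is_pcs theta s.

Definition tight_pair_seq (s r : nat -> R) : Prop :=
  [/\ is_pseudo_cosine_seq s, is_pseudo_cosine_seq r &
      is_pseudo_cosine_seq (fun i => s i * r i)].

Definition tight_pair (theta theta' : R) : Prop :=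
  exists s r : nat -> R,
    [/\ is_pcs theta s, is_pcs theta' r & tight_pair_seq s r].

End Graph.

(* Main.v *)
Require Import Defs.
From HB Require Import structures.
From mathcomp Require Import all_boot all_order all_algebra.
From mathcomp Require Import reals.
From mathcomp Require Import zify ring lra.
Import Order.TTheory GRing.Theory Num.Theory.
Set Implicit Arguments. Unset Strict Implicit. Unset Printing Implicit Defensive.

Section G.
Variables (T : finType) (e : rel T).
Hypotheses (esym : symmetric e) (eirr : irreflexive e).

Lemma ballS n x : ball e n x \subset ball e n.+1 x.
Proof. by rewrite /= subsetUl. Qed.

Lemma ball_mono m n x : (m <= n)%N -> ball e m x \subset ball e n x.
Proof.
elim: n => [|n IH] le; first by rewrite leqn0 in le; rewrite (eqP le) subxx.
rewrite leq_eqVlt in le; case/orP: le => [/eqP->|lt]; first exact: subxx.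
exact: subset_trans (IH lt) (ballS _ _).
Qed.

Lemma ball_edge n x w z : w \in ball e n x -> e w z -> z \in ball e n.+1 x.
Proof.
move=> wi ez; rewrite /= !inE; apply/orP; right; apply/existsP; exists w.
by rewrite wi ez.
Qed.

Lemma ballSP n x z : z \in ball e n.+1 x ->
  z \in ball e n x \/ exists2 w, w \in ball e n x & e w z.
Proof.
rewrite /= !inE => /orP[->|/existsP[w /andP[wi ez]]]; first by left.
by right; exists w.
Qed.

Lemma ball0 x z : (z \in ball e 0 x) = (z == x).
Proof. by rewrite /= inE. Qed.

Lemma ball_last x p : path e x p -> last x p \in ball e (size p) x.
Proof.
elim/last_ind: p => [|p z IH]; first by rewrite /= inE.
rewrite rcons_path last_rcons size_rcons => /andP[pp ez].
exact: ball_edge (IH pp) ez.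
Qed.

Lemma ball_pre n x y w : e y w -> x \in ball e n w -> x \in ball e n.+1 y.
Proof.
move=> ew; elim: n x => [|n IH] x.
  rewrite ball0 => /eqP->; apply: ball_edge ew; by rewrite ball0.
case/ballSP => [/IH xi|[u /IH ui ux]].
  exact: (subsetP (ballS _ _)).
exact: ball_edge ui ux.
Qed.

Lemma ball_sym n x y : y \in ball e n x -> x \in ball e n y.
Proof.
elim: n y => [|n IH] y; first by rewrite !ball0 eq_sym.
case/ballSP => [/IH xi|[w /IH wi wy]].
  exact: (subsetP (ballS _ _)).
by apply: ball_pre wi; rewrite esym.
Qed.

Hypothesis conn : connected_graph e.

Lemma conn_ball x y : exists2 n, (n < #|T|)%N & y \in ball e n x.
Proof.
case/connectP: (conn x y) => p pp ->.
case: (shortenP pp) => p' pp' up _.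
exists (size p'); last exact: ball_last.
move/card_uniqP: up => cu.
by move: (max_card (mem (x :: p'))); rewrite cu /=; lia.
Qed.

Lemma dist_le x y n : (dist e x y <= n)%N = (y \in ball e n x).
Proof.
set P := fun n => y \in ball e n x.
have hP : has P (iota 0 #|T|).
  case: (conn_ball x y) => n0 lt Pn; apply/hasP; exists n0 => //.
  by rewrite mem_iota.
have mlt : (dist e x y < #|T|)%N by move: hP; rewrite has_find size_iota.
have Pm : P (dist e x y).
  by have := nth_find 0 hP; rewrite nth_iota // add0n.
have notP j : (j < dist e x y)%N -> ~~ P j.
  move=> lt; have := before_find 0 lt; rewrite nth_iota ?add0n => [/negbT//|].
  exact: ltn_trans lt mlt.
apply/idP/idP => [le|Pn].
  exact: (subsetP (ball_mono x le)).
rewrite leqNgt; apply/negP => lt; by move: (notP _ lt); rewrite /P Pn.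
Qed.

Lemma dist_ball x y : y \in ball e (dist e x y) x.
Proof. by rewrite -dist_le. Qed.

Lemma dist_sym x y : dist e x y = dist e y x.
Proof.
apply/eqP; rewrite eqn_leq !dist_le.
by apply/andP; split; apply: ball_sym; apply: dist_ball.
Qed.

Lemma dist0 x y : (dist e x y == 0)%N = (y == x).
Proof. by rewrite -leqn0 dist_le ball0. Qed.

Lemma dist_xx x : dist e x x = 0%N.
Proof. by apply/eqP; rewrite dist0. Qed.

Lemma dist_edge x w z : e w z -> (dist e x z <= (dist e x w).+1)%N.
Proof. by move=> ez; rewrite dist_le; apply: ball_edge (dist_ball _ _) ez. Qed.

Lemma dist1 x z : (dist e x z == 1)%N = e x z.
Proof.
apply/idP/idP => [/eqP h|ez].
  have := dist_ball x z; rewrite h; case/ballSP => [|[w]].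
    by rewrite ball0 => /eqP zx; move: h; rewrite zx dist_xx.
  by rewrite ball0 => /eqP ->.
have le1 : (dist e x z <= 1)%N by rewrite dist_le; apply: ball_edge ez; rewrite ball0.
have : dist e x z != 0%N.
  by rewrite dist0; apply/eqP => zx; move: ez; rewrite zx eirr.
by lia.
Qed.

Lemma dist_pred x z n : dist e x z = n.+1 -> exists2 w, e w z & dist e x w = n.
Proof.
move=> h; have := dist_ball x z; rewrite h; case/ballSP => [|[w wi ez]].
  by rewrite -dist_le h ltnn.
exists w => //; move: wi; rewrite -dist_le => le.
have := dist_edge x ez; rewrite h; lia.
Qed.

Lemma dist_chain x u j : (j <= dist e x u)%N -> exists z, dist e x z = j.
Proof.
move eqm: (dist e x u) => m; elim: m u eqm => [|m IH] u eqm le.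
  by exists u; lia.
rewrite leq_eqVlt in le; case/orP: le => [/eqP->|lt]; first by exists u.
case: (dist_pred eqm) => w _ dw; exact: IH dw lt.
Qed.


Hypothesis dr : forall x y x' y', dist e x y = dist e x' y' ->
    forall i j, pcount e x y i j = pcount e x' y' i j.

Lemma inumE h i j x y : dist e x y = h -> inum e h i j = pcount e x y i j.
Proof.
move=> hxy; rewrite /inum; case: pickP => [[a b] /= /eqP hab | none].
  by apply: dr; rewrite hab.
by have := none (x, y); rewrite /= hxy eqxx.
Qed.

Lemma diam_attained : (0 < diameter e)%N -> exists x y, dist e x y = diameter e.
Proof.
rewrite /diameter; case: (pickP (fun _ : T * T => true)) => [xy _ | none].
  have pos : (0 < #|{: T * T}|)%N by apply/card_gt0P; exists xy.
  case: (@bigop.eq_bigmax _ (fun xy : T * T => dist e xy.1 xy.2) pos) => [[x y] /= ->] _.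
  by exists x, y.
by rewrite big_pred0.
Qed.

Lemma pair_at h : (h <= diameter e)%N -> (0 < diameter e)%N ->
  exists x y, dist e x y = h.
Proof.
move=> le pos; case: (diam_attained pos) => x [y dxy].
have : (h <= dist e x y)%N by rewrite dxy.
by case/dist_chain => z dz; exists x, z.
Qed.

Lemma card_sum (P : pred T) : #|[set z | P z]| = (\sum_z P z)%N.
Proof.
rewrite -sum1_card big_mkcond /=; apply: eq_bigr => z _.
by rewrite inE; case: (P z).
Qed.

Lemma sum_cab i : (1 <= i <= diameter e)%N -> (0 < diameter e)%N ->
  (ci e i + ai e i + bi e i)%N = valency e.
Proof.
move=> /andP[i1 iD] pos; case: (pair_at iD pos) => x [y dxy].
rewrite /ci /ai /bi /valency /bi !(inumE _ _ dxy) (inumE _ _ (dist_xx x)).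
rewrite /pcount !card_sum -!big_split /=; apply: eq_bigr => z _.
rewrite andbb; case: eqP => [/eqP h1|] /=; last by [].
rewrite dist1 in h1.
have h2 := dist_edge y h1.
have h3 := dist_edge y (h1 : e x z); rewrite esym in h1.
have h4 := dist_edge y h1.
have hs := dist_sym x y.
by do ![case: eqP => ? /=]; lia.
Qed.

Lemma bi_pos i : (i < diameter e)%N -> (0 < bi e i)%N.
Proof.
move=> iD; case: (diam_attained (leq_ltn_trans (leq0n i) iD)) => u [v duv].
have : (i.+1 <= dist e u v)%N by rewrite duv.
case/dist_chain => z dz; case: (dist_pred dz) => w ewz duw.
rewrite /bi (inumE _ _ (etrans (dist_sym w u) duw)) /pcount.
by apply/card_gt0P; exists z; rewrite inE dist1 ewz dz eqxx.
Qed.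

Lemma c1_pos : (0 < diameter e)%N -> (0 < ci e 1)%N.
Proof.
move=> pos; case: (pair_at pos pos) => x [y dxy].
rewrite /ci (inumE _ _ dxy) /pcount.
by apply/card_gt0P; exists y; rewrite inE dxy dist_xx eqxx.
Qed.

End G.

Unset Implicit Arguments.
Local Open Scope ring_scope.
Fixpoint gseq (R : fieldType) (c a b : nat -> R) (th : R) (n : nat) : R * R :=
  match n with
  | 0%N => (1, 1)
  | n'.+1 => let p := gseq R c a b th n' in
      (p.2, (th * p.2 - c n' * p.1 - a n' * p.2) / b n')
  end.
Arguments gseq {R}.

Lemma rec_exists (R : fieldType) (D : nat) (c a b : nat -> R) (th : R) :
  (forall i, (i < D)%N -> b i != 0) ->
  exists s : nat -> R, s 0%N = 1 /\ forall i, (i < D)%N ->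
    c i * s i.-1 + a i * s i + b i * s i.+1 = th * s i.
Proof.
move=> bnz; exists (fun n => (gseq c a b th n).2); split => // i iD.
have -> : (gseq c a b th i.-1).2 = (gseq c a b th i).1 by case: i iD.
rewrite /=; field; exact: bnz.
Qed.

Theorem theorem5p3 (T : finType) (e : rel T) (R : realType) :
  symmetric e -> irreflexive e -> distance_regular e ->
  (3 <= diameter e)%N ->
  bipartite_drg e \/ almost_bipartite_drg e ->
  [/\ forall theta : R, tight_pair e theta (valency e)%:R,
      forall theta : R, tight_pair e theta (- (valency e)%:R) &
      forall theta theta' : R, tight_pair e theta theta' ->
        (theta == (valency e)%:R) || (theta == - (valency e)%:R) ||
        (theta' == (valency e)%:R) || (theta' == - (valency e)%:R)].
Proof.
move=> esym eirr [conn dr] D3 hb.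
have pos : (0 < diameter e)%N by lia.
have aiz : forall i, (i < diameter e)%N -> ai e i = 0%N.
  move=> i iD; case: hb => [hb|[_ hb]]; apply: hb => //; exact: ltnW.
have cab : forall i, (i < diameter e)%N -> (ci e i + ai e i + bi e i)%N = valency e.
  case=> [|i] iD.
    by rewrite /valency; change (ci e 0) with (ai e 0); rewrite aiz.
  move: (@sum_cab T e esym eirr conn dr i.+1) => h; apply: h; lia.
have cb : forall i, (i < diameter e)%N -> (ci e i + bi e i)%N = valency e.
  by move=> i iD; rewrite -(cab i iD) aiz ?addn0.
have c0 : ci e 0 = 0%N by change (ci e 0) with (ai e 0); rewrite aiz.
have exs : forall th : R, exists s, is_pcs e th s.
  move=> th; case: (@rec_exists R (diameter e) (fun i => (ci e i)%:R)
     (fun i => (ai e i)%:R) (fun i => (bi e i)%:R) th) => [i iD|s [s0 hs]].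
    by rewrite pnatr_eq0 -lt0n (bi_pos esym eirr conn dr).
  by exists s; split.
split.
- move=> th; case: (exs th) => s hs.
  have h1 : is_pcs e (valency e)%:R (fun _ => 1 : R).
    split => // i iD; rewrite !mulr1 -!natrD; congr (_%:R); exact: cab.
  exists s, (fun _ => 1); split => //; split; [by exists th|by exists (valency e)%:R|].
  exists th; case: hs => s0 hs; split; first by rewrite /= s0 mulr1.
  by move=> i iD /=; rewrite !mulr1; apply: hs.
- move=> th; case: (exs th) => s hs.
  have h1 : is_pcs e (- (valency e)%:R) (fun i => (-1) ^+ i : R).
    split => // [[|i]] iD /=.
      by rewrite c0 aiz // expr1 expr0 /valency; ring.
    rewrite aiz // -(cb _ iD) natrD !exprS; ring.
  exists s, (fun i => (-1) ^+ i); split => //; split; [by exists th|by exists (- (valency e)%:R)|].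
  exists (- th); case: hs => s0 hs; split; first by rewrite /= s0 mulr1.
  move=> [|i] iD /=.
    have := hs 0%N iD; rewrite /= c0 aiz // => h.
    transitivity (- ((0%N)%:R * s 0%N + (0%N)%:R * s 0%N + (bi e 0)%:R * s 1%N) : R).
      by rewrite expr1 expr0; ring.
    by rewrite h; ring.
  have := hs i.+1 iD; rewrite /= aiz // mul0r addr0 => h.
  transitivity (- (-1) ^+ i.+1 * ((ci e i.+1)%:R * s i + (bi e i.+1)%:R * s i.+2)).
    by rewrite !exprS; ring.
  by rewrite h; ring.
- move=> th th' [s [r [hs hr [_ _ [th'' hp]]]]].
  case: hs => s0 hs; case: hr => r0 hr; case: hp => _ hp.
  have D0 : (0 < diameter e)%N by lia.
  have D1 : (1 < diameter e)%N by lia.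
  have es0 := hs 0%N D0; have er0 := hr 0%N D0; have ep0 := hp 0%N D0.
  have es1 := hs 1%N D1; have er1 := hr 1%N D1; have ep1 := hp 1%N D1.
  rewrite /= c0 aiz // !mul0r !add0r in es0 er0 ep0.
  rewrite /= aiz // mul0r addr0 in es1 er1 ep1.
  rewrite s0 in es0 es1; rewrite r0 in er0 er1; rewrite s0 r0 in ep0 ep1.
  have hbc : (bi e 1)%:R = (valency e)%:R - (ci e 1)%:R :> R.
    by rewrite -(cb 1%N D1) natrD; ring.
  set k := (valency e)%:R in hbc es0 er0 ep0 *.
  set c := (ci e 1)%:R in hbc es1 er1 ep1.
  set b := (bi e 1)%:R in hbc es0 er0 ep0 es1 er1 ep1.
  rewrite mulr1 in es0; rewrite mulr1 in er0; rewrite !mulr1 in ep0.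
  subst th th' th''.
  have hds : b * s 2%N - (k * s 1%N * s 1%N - c) = 0.
    by rewrite -es1; ring.
  have hdr : b * r 2%N - (k * r 1%N * r 1%N - c) = 0.
    by rewrite -er1; ring.
  have hdp : b * (s 2%N * r 2%N) - (k * (s 1%N * r 1%N) * (s 1%N * r 1%N) - c) = 0.
    by rewrite -ep1; ring.
  have key : (c * k) * ((s 1%N ^+ 2 - 1) * (r 1%N ^+ 2 - 1)) = 0.
    transitivity (- ((b * s 2%N - (k * s 1%N * s 1%N - c)) * (b * r 2%N)
       + (k * s 1%N * s 1%N - c) * (b * r 2%N - (k * r 1%N * r 1%N - c))
       - b * (b * (s 2%N * r 2%N) - (k * (s 1%N * r 1%N) * (s 1%N * r 1%N) - c)))).
      rewrite hbc; ring.
    by rewrite hds hdr hdp; ring.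
  have ck : c * k != 0.
    rewrite mulf_eq0 negb_or /c /k !pnatr_eq0 -!lt0n (c1_pos conn dr pos) /=.
    exact: (bi_pos esym eirr conn dr D0).
  have sq : forall x : R, x ^+ 2 - 1 = 0 -> x = 1 \/ x = -1.
    move=> x h; have : (x - 1) * (x + 1) = 0 by rewrite -h; ring.
    move/eqP; rewrite mulf_eq0 subr_eq0 addr_eq0 => /orP[] /eqP ->; by [left|right].
  move/eqP: key; rewrite mulf_eq0 (negbTE ck) /= mulf_eq0 => /orP[] /eqP /sq [] ->.
  - by rewrite mulr1 eqxx.
  - by rewrite mulrN1 eqxx /= ?orbT.
  - by rewrite mulr1 eqxx /= ?orbT.
  - by rewrite mulrN1 eqxx /= ?orbT.
Qed.
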